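(* Let $n$ be even, $k_U,k_V\le n/2$, and ${\mathbf{a}},{\mathbf{b}},{\mathbf{c}},{\mathbf{d}}\in\mathbb{F}_3^{n/2}$ with $a_id_i-b_ic_i=1$, $a_ic_i\neq0$ for all $i$, and let $n_I=|\{1\le i\le n/2:b_id_i=0\}|$. Choose ${\mathbf{H}}_U$ uniformly in $\mathbb{F}_3^{(n/2-k_U)\times n/2}$ and ${\mathbf{H}}_V$ uniformly in $\mathbb{F}_3^{(n/2-k_V)\times n/2}$, let $U=\{{\mathbf{u}}:{\mathbf{u}}{\mathbf{H}}_U^\top={\mathbf{0}}\}$, $V=\{{\mathbf{v}}:{\mathbf{v}}{\mathbf{H}}_V^\top={\mathbf{0}}\}$, and ${\mathcal C}=\{({\mathbf{a}}\odot{\mathbf{u}}+{\mathbf{b}}\odot{\mathbf{v}},{\mathbf{c}}\odot{\mathbf{u}}+{\mathbf{d}}\odot{\mathbf{v}}):{\mathbf{u}}\in U,{\mathbf{v}}\in V\}$. For $1\le z\le n$ let $a_{({\mathbf{u}},{\mathbf{v}})}(z)$, $a_{({\mathbf{u}},{\mathbf{0}})}(z)$, $a_{({\mathbf{0}},{\mathbf{v}})}(z)$ be the expected numbers of codewords of weight $z$ respectively in ${\mathcal C}$, of the form $({\mathbf{a}}\odot{\mathbf{u}},{\mathbf{c}}\odot{\mathbf{u}})$ with ${\mathbf{u}}\in U$, and of the form $({\mathbf{b}}\odot{\mathbf{v}},{\mathbf{d}}\odot{\mathbf{v}})$ with ${\mathbf{v}}\in V$. For even $z$: $$a_{({\mathbf{u}},{\mathbf{0}})}(z)=\frac{\binom{n/2}{z/2}2^{z/2}}{3^{n/2-k_U}},\qquad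 a_{({\mathbf{0}},{\mathbf{v}})}(z)=\frac{1}{3^{n/2-k_V}}\sum_{\substack{j=0\\ j\text{ even}}}^{z}\binom{n_I}{j}\binom{n/2-n_I}{\frac{z-j}{2}}2^{(z+j)/2},$$ $$a_{({\mathbf{u}},{\mathbf{v}})}(z)=a_{({\mathbf{u}},{\mathbf{0}})}(z)+a_{({\mathbf{0}},{\mathbf{v}})}(z)+\frac{1}{3^{n-k_U-k_V}}\Big(\binom{n}{z}2^z-\binom{n/2}{z/2}2^{z/2}-\sum_{\substack{j=0\\ j\text{ even}}}^{z}\binom{n_I}{j}\binom{n/2-n_I}{\frac{z-j}{2}}2^{(z+j)/2}\Big);$$ for odd $z$: $$a_{({\mathbf{u}},{\mathbf{0}})}(z)=0,\qquad a_{({\mathbf{0}},{\mathbf{v}})}(z)=\frac{1}{3^{n/2-k_V}}\sum_{\substack{j=0\\ j\text{ odd}}}^{z}\binom{n_I}{j}\binom{n/2-n_I}{\frac{z-j}{2}}2^{(z+j)/2},$$ $$a_{({\mathbf{u}},{\mathbf{v}})}(z)=a_{({\mathbf{0}},{\mathbf{v}})}(z)+\frac{1}{3^{n-k_U-k_V}}\Big(\binom{n}{z}2^z-\sum_{\substack{j=0\\ j\text{ odd}}}^{z}\binom{n_I}{j}\binom{n/2-n_I}{\frac{z-j}{2}}2^{(z+j)/2}\Big).$$ On the other hand, for a linear code of length $n$ over $\mathbb{F}_3$ defined by a parity-check matrix chosen uniformly in $\mathbb{F}_3^{(n-k_U-k_V)\times n}$, the expected number of codewords of weight $z>0$ is 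$a(z)=\binom{n}{z}2^z/3^{n-k_U-k_V}$.
   Context: $\odot$ is the componentwise product; weight means Hamming weight; binomial coefficients with lower index out of range are $0$. *)

(* Defs.v *)
From mathcomp Require Import all_boot all_order all_algebra.
Set Implicit Arguments. Unset Strict Implicit. Unset Printing Implicit Defensive.
Import Order.TTheory GRing.Theory Num.Theory.
Local Open Scope ring_scope.

Definition hprod (F : ringType) (m : nat) (x y : 'rV[F]_m) : 'rV[F]_m :=
  \row_i (x 0 i * y 0 i).

Definition wt (F : ringType) (m : nat) (x : 'rV[F]_m) : nat :=
  #|[set i : 'I_m | x 0 i != 0]|.

Definition kerH (F : finRingType) (r m : nat) (H : 'M[F]_(r, m)) : {set 'rV[F]_m} :=
  [set u : 'rV[F]_m | u *m H^T == 0].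

Definition nwt (F : finRingType) (m : nat) (S : {set 'rV[F]_m}) (z : nat) : nat :=
  #|[set x in S | wt x == z]|.

(* the code C = {(a.u + b.v, c.u + d.v) : u in U, v in V}, codewords being
   the concatenation (row_mx) of the two halves, of length m + m = n *)
Definition codeC (F : finRingType) (m rU rV : nat) (a b c d : 'rV[F]_m)
  (HU : 'M[F]_(rU, m)) (HV : 'M[F]_(rV, m)) : {set 'rV[F]_(m + m)} :=
  [set row_mx (hprod a u + hprod b v) (hprod c u + hprod d v)
     | u in kerH HU, v in kerH HV].

Definition codeCU (F : finRingType) (m rU : nat) (a c : 'rV[F]_m)
  (HU : 'M[F]_(rU, m)) : {set 'rV[F]_(m + m)} :=
  [set row_mx (hprod a u) (hprod c u) | u in kerH HU].

Definition codeCV (F : finRingType) (m rV : nat) (b d : 'rV[F]_m)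
  (HV : 'M[F]_(rV, m)) : {set 'rV[F]_(m + m)} :=
  [set row_mx (hprod b v) (hprod d v) | v in kerH HV].

Definition expect2 (F : finRingType) (m rU rV : nat)
  (f : 'M[F]_(rU, m) -> 'M[F]_(rV, m) -> nat) : rat :=
  (\sum_(HU : 'M[F]_(rU, m)) \sum_(HV : 'M[F]_(rV, m)) (f HU HV)%:R)
  / (#|{: 'M[F]_(rU, m)}| * #|{: 'M[F]_(rV, m)}|)%:R.

Definition expect1 (F : finRingType) (r m : nat) (f : 'M[F]_(r, m) -> nat) : rat :=
  (\sum_(H : 'M[F]_(r, m)) (f H)%:R) / #|{: 'M[F]_(r, m)}|%:R.

Definition jsum (m nI z : nat) (p : bool) : nat :=
  \sum_(0 <= j < z.+1 | odd j == p)
     'C(nI, j) * 'C(m - nI, (z - j)./2) * 2 ^ ((z + j)./2).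

(* Main.v *)
Require Import Defs.
From mathcomp Require Import all_boot all_order all_algebra.
From mathcomp Require Import ring lra zify.
Import GRing.Theory Num.Theory.
Local Open Scope ring_scope.

Lemma card_filter_imset (aT rT : finType) (f : aT -> rT) (A : {set aT}) (P : pred rT) :
  injective f -> #|[set x in f @: A | P x]| = (\sum_(y : aT) ((y \in A) && P (f y)))%N.
Proof.
move=> fI.
have -> : [set x in f @: A | P x] = f @: [set y in A | P (f y)].
  apply/setP => x; rewrite !inE; apply/andP/imsetP.
    by case=> /imsetP [y yA ->] Py; exists y; rewrite // inE yA.
  by case=> y; rewrite inE => /andP [yA Py] ->; split; [apply: imset_f|].
rewrite card_imset // -sum1_card big_mkcond /=; apply: eq_bigr => y _.
by rewrite inE; case: (_ && _).
Qed.

Lemma wtE (m : nat) (x : 'rV['F_3]_m) : wt x = (\sum_i (x ord0 i != 0%R))%N.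
Proof.
rewrite /wt -sum1_card big_mkcond /=; apply: eq_bigr => i _.
by rewrite inE; case: (_ != _).
Qed.

Lemma wt_row_mx (m1 m2 : nat) (x : 'rV['F_3]_m1) (y : 'rV['F_3]_m2) :
  wt (row_mx x y) = (wt x + wt y)%N.
Proof.
by rewrite !wtE big_split_ord /=; congr (_ + _)%N; apply: eq_bigr => i _;
  rewrite ?row_mxEl ?row_mxEr.
Qed.

Lemma hprod0 (m : nat) (a : 'rV['F_3]_m) : hprod a 0 = 0.
Proof. by apply/rowP => i; rewrite !mxE mulr0. Qed.

Lemma card_F3 : #|'F_3| = 3%N.
Proof. by rewrite card_Fp. Qed.

Lemma card_rV (r : nat) : #|{: 'rV['F_3]_r}| = (3 ^ r)%N.
Proof. by rewrite card_mx card_F3 mul1n. Qed.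

Lemma fiber_card (r m : nat) (u : 'rV['F_3]_m) : u != 0 ->
  (#|[set H : 'M['F_3]_(r,m) | u *m H^T == 0%R]| * 3 ^ r)%N = #|{: 'M['F_3]_(r,m)}|.
Proof.
move=> u0.
have [j0 uj0] : exists j, u ord0 j != 0.
  apply/existsP; apply: contraR u0 => /existsPn H; apply/eqP/rowP => j.
  by rewrite [RHS]mxE; apply/eqP; move: (H j); rewrite negbK.
pose D (y : 'rV['F_3]_r) : 'M['F_3]_(r,m) :=
  \matrix_(i, j) (if j == j0 then (u ord0 j0)^-1 * y ord0 i else 0).
have uD y : u *m (D y)^T = y.
  apply/rowP => i; rewrite !mxE (bigD1 j0) //= big1 => [|j /negPf jn]; last first.
    by rewrite !mxE jn mulr0.
  by rewrite !mxE eqxx mulrA mulfV // mul1r addr0.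
have fib y : #|[set H : 'M['F_3]_(r,m) | u *m H^T == y]| =
             #|[set H : 'M['F_3]_(r,m) | u *m H^T == 0]|.
  have -> : [set H : 'M['F_3]_(r,m) | u *m H^T == y] =
            (fun H => H + D y) @: [set H : 'M['F_3]_(r,m) | u *m H^T == 0].
    apply/setP => H; rewrite inE; apply/eqP/imsetP.
      move=> HY; exists (H - D y); last by rewrite subrK.
      by rewrite inE linearB /= mulmxBr HY uD subrr.
    by case=> H0; rewrite inE => /eqP H00 ->; rewrite linearD /= mulmxDr H00 uD add0r.
  by rewrite card_imset //; apply: addIr.
rewrite -card_rV mulnC -sum_nat_const.
transitivity (\sum_(y : 'rV['F_3]_r) #|[set H : 'M['F_3]_(r,m) | u *m H^T == y]|)%N.
  by apply: eq_bigr => y _; rewrite fib.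
symmetry; rewrite -sum1_card (partition_big (fun H => u *m H^T) predT) //=.
apply: eq_bigr => y _; rewrite -sum1_card; by apply: eq_bigl => H; rewrite inE.
Qed.

Definition pr (r : nat) {m : nat} (u : 'rV['F_3]_m) : rat :=
  if u == 0 then 1 else ((3 ^ r)%:R)^-1.

Lemma cardM_gt0 (r m : nat) : #|{: 'M['F_3]_(r,m)}|%:R != 0 :> rat.
Proof. by rewrite pnatr_eq0 card_mx card_F3 -lt0n expn_gt0. Qed.

Lemma PL (r m : nat) (u : 'rV['F_3]_m) :
  \sum_(H : 'M['F_3]_(r,m)) (nat_of_bool (u \in kerH H))%:R =
  #|{: 'M['F_3]_(r,m)}|%:R * pr r u.
Proof.
rewrite -natr_sum.
have -> : (\sum_(H : 'M['F_3]_(r,m)) (u \in kerH H))%N =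
          #|[set H : 'M['F_3]_(r,m) | u *m H^T == 0%R]|.
  rewrite -sum1_card [RHS]big_mkcond /=; apply: eq_bigr => H _.
  by rewrite !inE; case: (_ == _).
rewrite /pr; case: eqP => [->|/eqP u0].
  rewrite mulr1; congr (_%:R); apply: eq_card => H; rewrite !inE mul0mx eqxx.
  by [].
by rewrite -(@fiber_card r m u u0) natrM mulfK // pnatr_eq0 -lt0n expn_gt0.
Qed.

Lemma E1 (r m : nat) (W : 'rV['F_3]_m -> nat) :
  (\sum_(H : 'M['F_3]_(r,m)) (\sum_u (u \in kerH H) * W u)%N%:R)
    / #|{: 'M['F_3]_(r,m)}|%:R = \sum_u (W u)%:R * pr r u.
Proof.
under eq_bigr do rewrite natr_sum.
rewrite exchange_big mulr_suml; apply: eq_bigr => u _.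
under eq_bigr do rewrite natrM.
rewrite -mulr_suml PL; have h := @cardM_gt0 r m; by field.
Qed.

Lemma E2 (m rU rV : nat) (W : 'rV['F_3]_m -> 'rV['F_3]_m -> nat) :
  expect2 (fun (HU : 'M['F_3]_(rU, m)) (HV : 'M['F_3]_(rV, m)) =>
    (\sum_u \sum_v (u \in kerH HU) * (v \in kerH HV) * W u v)%N)
  = \sum_u \sum_v (W u v)%:R * pr rU u * pr rV v.
Proof.
rewrite /expect2.
under eq_bigr do under eq_bigr do rewrite natr_sum.
under eq_bigr do rewrite exchange_big.
rewrite exchange_big mulr_suml; apply: eq_bigr => u _.
under eq_bigr do under eq_bigr do rewrite natr_sum.
under eq_bigr do rewrite exchange_big.
rewrite exchange_big mulr_suml; apply: eq_bigr => v _.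
under eq_bigr do under eq_bigr do rewrite !natrM.
transitivity ((W u v)%:R * ((\sum_(HU : 'M['F_3]_(rU, m)) (nat_of_bool (u \in kerH HU))%:R) *
   (\sum_(HV : 'M['F_3]_(rV, m)) (nat_of_bool (v \in kerH HV))%:R)) /
   (#|{: 'M['F_3]_(rU, m)}| * #|{: 'M['F_3]_(rV, m)}|)%:R : rat).
  congr (_ / _); symmetry; rewrite mulrC mulr_suml mulr_suml; apply: eq_bigr => HU _.
  by rewrite mulr_sumr mulr_suml.
rewrite !PL natrM.
have h1 := @cardM_gt0 rU m; have h2 := @cardM_gt0 rV m.
by field; rewrite h1 h2.
Qed.

Lemma E2l (m rU rV : nat) (f : 'M['F_3]_(rU, m) -> nat) :
  expect2 (fun (HU : 'M['F_3]_(rU, m)) (HV : 'M['F_3]_(rV, m)) => f HU)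
  = (\sum_HU (f HU)%:R) / #|{: 'M['F_3]_(rU, m)}|%:R.
Proof.
rewrite /expect2; under eq_bigr do rewrite sumr_const.
rewrite sumrMnl natrM -mulr_natr.
have h2 := @cardM_gt0 rV m; have h1 := @cardM_gt0 rU m.
by field; rewrite h1 h2.
Qed.

Lemma E2r (m rU rV : nat) (f : 'M['F_3]_(rV, m) -> nat) :
  expect2 (fun (HU : 'M['F_3]_(rU, m)) (HV : 'M['F_3]_(rV, m)) => f HV)
  = (\sum_HV (f HV)%:R) / #|{: 'M['F_3]_(rV, m)}|%:R.
Proof.
rewrite /expect2 exchange_big /=; under eq_bigr do rewrite sumr_const.
rewrite sumrMnl natrM -mulr_natr.
have h2 := @cardM_gt0 rV m; have h1 := @cardM_gt0 rU m.
by field; rewrite h1 h2.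
Qed.

Lemma sumF3 (V : nmodType) (g : bool -> V) : \sum_(t : 'F_3) g (t != 0) = g false + g true *+ 2.
Proof.
rewrite (bigD1 0) //=; congr (_ + _).
rewrite (eq_bigr (fun _ => g true)) => [|t /negPf ->] //.
rewrite (eq_bigl (fun i => i \in predC1 0)) // sumr_const cardC1 card_ord.
by [].
Qed.


Lemma GF (m : nat) (w : 'I_m -> nat) :
  \sum_(x : 'rV['F_3]_m) 'X^(\sum_i w i * (x ord0 i != 0%R))%N
  = \prod_i (1 + 'X^(w i) *+ 2) :> {poly rat}.
Proof.
transitivity (\prod_i \sum_(t : 'F_3) 'X^(w i * (t != 0)) : {poly rat}); last first.
  by apply: eq_bigr => i _; rewrite (@sumF3 _ (fun b : bool => 'X^(w i * b) : {poly rat})) muln0 muln1 expr0.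
rewrite bigA_distr_bigA /=.
have hb : bijective (fun f : {ffun 'I_m -> 'F_3} => \row_i f i : 'rV['F_3]_m).
  exists (fun x : 'rV['F_3]_m => [ffun i => x ord0 i]) => [f|x].
    by apply/ffunP => i; rewrite ffunE mxE.
  by apply/rowP => i; rewrite !mxE ffunE.
rewrite (reindex _ (onW_bij _ hb)) /=; apply: eq_bigr => f _.
rewrite GRing.expr_sum; apply: eq_bigr => i _; by rewrite mxE.
Qed.

Lemma coef_count (T : finType) (k : T -> nat) (z : nat) :
  (\sum_x 'X^(k x) : {poly rat})`_z = (\sum_x (k x == z) : nat)%:R.
Proof.
by rewrite coef_sum natr_sum; apply: eq_bigr => x _; rewrite coefXn eq_sym.
Qed.

Lemma coef1X (N z : nat) :
  ((1 + 'X *+ 2) ^+ N : {poly rat})`_z = ('C(N, z) * 2 ^ z)%:R.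
Proof.
elim: N z => [|N IH] z.
  by rewrite expr0 coef1; case: z => [|z].
have -> : (1 + 'X *+ 2) ^+ N.+1 = (1 + 'X *+ 2) ^+ N + ('X * (1 + 'X *+ 2) ^+ N) *+ 2 :> {poly rat}.
  by rewrite exprS mulrDl mul1r mulrnAl.
rewrite coefD coefMn coefXM; case: z => [|z] /=.
  by rewrite IH addr0 !bin0.
rewrite !IH binS expnS !(natrM, natrD, natrX); ring.
Qed.

Lemma coef1X2 (N z : nat) :
  ((1 + 'X^2 *+ 2) ^+ N : {poly rat})`_z =
  if odd z then 0 else ('C(N, z./2) * 2 ^ z./2)%:R.
Proof.
elim: N z => [|N IH] z.
  rewrite expr0 coef1; case: z => [|[|z]] //=.
  by case: (odd z).
have -> : (1 + 'X^2 *+ 2) ^+ N.+1 = (1 + 'X^2 *+ 2) ^+ N + ('X^2 * (1 + 'X^2 *+ 2) ^+ N) *+ 2 :> {poly rat}.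
  by rewrite exprS mulrDl mul1r mulrnAl.
rewrite coefD coefMn coefXnM; case: z => [|[|z]] /=.
- by rewrite IH /= addr0 !bin0.
- by rewrite IH /= addr0.
rewrite subn2 /= !IH /= negbK; case: (odd z); first by rewrite addr0.
rewrite binS expnS !(natrM, natrD, natrX); ring.
Qed.

Lemma half_sum (z j : nat) : (j <= z)%N -> ~~ odd (z - j) ->
  (z + j)./2 = (j + (z - j)./2)%N.
Proof.
move=> jz ev.
have e : (z - j)%N = ((z - j)./2).*2 by rewrite halfK (negbTE ev) subn0.
have -> : (z + j = (j + (z - j)./2).*2)%N.
  by rewrite doubleD -e -addnn addnAC subnKC // addnC.
by rewrite doubleK.
Qed.

Lemma coef_mixed (m nI z : nat) :
  ((1 + 'X *+ 2) ^+ nI * (1 + 'X^2 *+ 2) ^+ (m - nI) : {poly rat})`_z =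
  (jsum m nI z (odd z))%:R.
Proof.
rewrite coefM /jsum natr_sum [RHS]big_mkcond /= [RHS]big_mkord; apply: eq_bigr => j _.
have jz : (j <= z)%N by rewrite -ltnS.
rewrite coef1X coef1X2 oddB //.
case oj: (odd j); case oz: (odd z) => /=; rewrite ?mulr0 //.
- rewrite half_sum ?oddB ?oj ?oz // expnD !(natrM, natrX); ring.
- rewrite half_sum ?oddB ?oj ?oz // expnD !(natrM, natrX); ring.
Qed.

Lemma wt_hprod2 (m : nat) (a c u : 'rV['F_3]_m) :
  (forall i, a 0 i * c 0 i != 0) ->
  wt (row_mx (hprod a u) (hprod c u)) = (\sum_i 2 * (u ord0 i != 0%R))%N.
Proof.
move=> hac; rewrite wt_row_mx !wtE -big_split /=; apply: eq_bigr => i _.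
move: (hac i); rewrite !mxE mulf_eq0 negb_or => /andP [a0 c0].
by rewrite !mulf_eq0 (negbTE a0) (negbTE c0) /=; case: (u _ _ == 0).
Qed.

Lemma SU_count (m z : nat) (a c : 'rV['F_3]_m) :
  (forall i, a 0 i * c 0 i != 0) ->
  (\sum_u (wt (row_mx (hprod a u) (hprod c u)) == z) : nat)%:R =
  (if odd z then 0 else ('C(m, z./2) * 2 ^ z./2)%:R : rat).
Proof.
move=> hac; rewrite -coef_count.
under eq_bigr => u _ do rewrite (@wt_hprod2 m a c u hac).
by rewrite GF prodr_const card_ord coef1X2.
Qed.

Lemma wt_hprodV (m : nat) (a b c d v : 'rV['F_3]_m) :
  (forall i, a 0 i * d 0 i - b 0 i * c 0 i = 1) ->
  wt (row_mx (hprod b v) (hprod d v)) =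
  (\sum_i (if (b 0 i * d 0 i == 0)%R then 1 else 2) * (v ord0 i != 0%R))%N.
Proof.
move=> hdet; rewrite wt_row_mx !wtE -big_split /=; apply: eq_bigr => i _.
rewrite !mxE !mulf_eq0.
have -> : v ord0 i = v 0 i by [].
have [b0|bn] := eqVneq (b 0 i) 0; have [d0|dn] := eqVneq (d 0 i) 0 => /=.
- by move: (hdet i); rewrite b0 d0 !mulr0 mul0r subr0 => /esym/eqP; rewrite oner_eq0.
all: by case: (v 0 i == 0).
Qed.

Lemma SV_count (m z : nat) (a b c d : 'rV['F_3]_m) :
  (forall i, a 0 i * d 0 i - b 0 i * c 0 i = 1) ->
  (\sum_v (wt (row_mx (hprod b v) (hprod d v)) == z) : nat)%:R =
  (jsum m #|[set i : 'I_m | b 0 i * d 0 i == 0]| z (odd z))%:R :> rat.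
Proof.
move=> hdet; rewrite -coef_count.
under eq_bigr => v _ do rewrite (@wt_hprodV m a b c d v hdet).
rewrite GF (bigID (fun i => b 0 i * d 0 i == 0)) /=.
set S := [set i : 'I_m | b 0 i * d 0 i == 0].
rewrite [X in X * _](eq_bigl (fun i => i \in S)) => [|i]; last by rewrite inE.
rewrite [X in _ * X](eq_bigl (fun i => i \in ~: S)) => [|i]; last by rewrite !inE.
rewrite [X in X * _](eq_bigr (fun _ => 1 + 'X *+ 2)) => [|i]; last by rewrite inE => ->.
rewrite [X in _ * X](eq_bigr (fun _ => 1 + 'X^2 *+ 2)) => [|i]; last by rewrite !inE => /negPf ->.
rewrite !prodr_const.
have -> : #|~: S| = (m - #|S|)%N.
  by have := cardsC S; rewrite card_ord; lia.
by rewrite coef_mixed.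
Qed.

Lemma phi_inj (m : nat) (a b c d : 'rV['F_3]_m) :
  (forall i, a 0 i * d 0 i - b 0 i * c 0 i = 1) ->
  injective (fun p : 'rV['F_3]_m * 'rV['F_3]_m =>
     row_mx (hprod a p.1 + hprod b p.2) (hprod c p.1 + hprod d p.2)).
Proof.
move=> hdet [u v] [u' v'] /= /eq_row_mx [e1 e2].
have h1 i : a 0 i * u 0 i + b 0 i * v 0 i = a 0 i * u' 0 i + b 0 i * v' 0 i.
  by move/rowP: e1 => /(_ i); rewrite !mxE.
have h2 i : c 0 i * u 0 i + d 0 i * v 0 i = c 0 i * u' 0 i + d 0 i * v' 0 i.
  by move/rowP: e2 => /(_ i); rewrite !mxE.
congr (_, _); apply/rowP => i; apply/eqP; rewrite -subr_eq0.
- have -> : u 0 i - u' 0 i =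
    d 0 i * ((a 0 i * u 0 i + b 0 i * v 0 i) - (a 0 i * u' 0 i + b 0 i * v' 0 i))
    - b 0 i * ((c 0 i * u 0 i + d 0 i * v 0 i) - (c 0 i * u' 0 i + d 0 i * v' 0 i)).
    by rewrite -[LHS]mul1r -(hdet i); ring.
  by rewrite h1 h2 !subrr !mulr0 subrr.
- have -> : v 0 i - v' 0 i =
    a 0 i * ((c 0 i * u 0 i + d 0 i * v 0 i) - (c 0 i * u' 0 i + d 0 i * v' 0 i))
    - c 0 i * ((a 0 i * u 0 i + b 0 i * v 0 i) - (a 0 i * u' 0 i + b 0 i * v' 0 i)).
    by rewrite -[LHS]mul1r -(hdet i); ring.
  by rewrite h1 h2 !subrr !mulr0 subrr.
Qed.

Lemma T_count (m z : nat) (a b c d : 'rV['F_3]_m) :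
  (forall i, a 0 i * d 0 i - b 0 i * c 0 i = 1) ->
  (\sum_u \sum_v
     (wt (row_mx (hprod a u + hprod b v) (hprod c u + hprod d v)) == z) : nat)%:R
  = ('C(m + m, z) * 2 ^ z)%:R :> rat.
Proof.
move=> hdet; have hi := @phi_inj m a b c d hdet.
have hb := inj_card_bij hi.
have hb' : bijective (fun p : 'rV['F_3]_m * 'rV['F_3]_m =>
     row_mx (hprod a p.1 + hprod b p.2) (hprod c p.1 + hprod d p.2)).
  by apply: hb; rewrite card_prod !card_rV expnD.
transitivity ((\sum_(x : 'rV['F_3]_(m + m)) (wt x == z) : nat)%:R : rat).
  by congr (_%:R); rewrite pair_bigA /= [RHS](reindex _ (onW_bij _ hb')).
rewrite -coef_count.
under eq_bigr => x _ do rewrite wtE.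
rewrite (eq_bigr (fun x : 'rV['F_3]_(m + m) => 'X^(\sum_i 1 * (x ord0 i != 0%R))%N)) => [|x _]; last first.
  by congr ('X^_); apply: eq_bigr => i _; rewrite mul1n.
by rewrite GF prodr_const card_ord coef1X.
Qed.

Lemma nwt_C (m rU rV z : nat) (a b c d : 'rV['F_3]_m)
  (HU : 'M['F_3]_(rU, m)) (HV : 'M['F_3]_(rV, m)) :
  (forall i, a 0 i * d 0 i - b 0 i * c 0 i = 1) ->
  nwt (codeC a b c d HU HV) z =
  (\sum_u \sum_v (u \in kerH HU) * (v \in kerH HV) *
     (wt (row_mx (hprod a u + hprod b v) (hprod c u + hprod d v)) == z))%N.
Proof.
move=> hdet; rewrite /nwt /codeC curry_imset2X card_filter_imset; last first.
  by move=> [u v] [u' v'] e; apply: (@phi_inj m a b c d hdet); exact: e.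
rewrite [RHS]pair_bigA; apply: eq_bigr => [[u v]] _ /=.
rewrite in_setX; case: (u \in kerH HU); case: (v \in kerH HV) => /=; by rewrite ?mul1n ?mul0n ?muln0.
Qed.

Lemma nwt_CU (m rU z : nat) (a c : 'rV['F_3]_m) (HU : 'M['F_3]_(rU, m)) :
  (forall i, a 0 i * c 0 i != 0) ->
  nwt (codeCU a c HU) z =
  (\sum_u (u \in kerH HU) * (wt (row_mx (hprod a u) (hprod c u)) == z))%N.
Proof.
move=> hac; rewrite /nwt /codeCU card_filter_imset; last first.
  move=> u u' /eq_row_mx [e1 _]; apply/rowP => i.
  move/rowP: e1 => /(_ i); rewrite !mxE; apply: mulfI.
  by move: (hac i); rewrite mulf_eq0 negb_or => /andP [].
by apply: eq_bigr => u _; case: (u \in kerH HU); rewrite /= ?mul1n ?mul0n.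
Qed.

Lemma nwt_CV (m rV z : nat) (a b c d : 'rV['F_3]_m) (HV : 'M['F_3]_(rV, m)) :
  (forall i, a 0 i * d 0 i - b 0 i * c 0 i = 1) ->
  nwt (codeCV b d HV) z =
  (\sum_v (v \in kerH HV) * (wt (row_mx (hprod b v) (hprod d v)) == z))%N.
Proof.
move=> hdet; rewrite /nwt /codeCV card_filter_imset; last first.
  move=> u u' /eq_row_mx [e1 e2]; apply/rowP => i.
  move/rowP: e1 => /(_ i); move/rowP: e2 => /(_ i); rewrite !mxE.
  have [b0|bn] := eqVneq (b 0 i) 0; last by move=> _; apply: mulfI.
  have [d0|dn] := eqVneq (d 0 i) 0; last by move=> h _; apply: (mulfI dn).
  by move: (hdet i); rewrite b0 d0 !mulr0 mul0r subr0 => /esym/eqP; rewrite oner_eq0.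
by apply: eq_bigr => u _; case: (u \in kerH HV); rewrite /= ?mul1n ?mul0n.
Qed.

Lemma nwt_ker (r m z : nat) (H : 'M['F_3]_(r, m)) :
  nwt (kerH H) z = (\sum_u (u \in kerH H) * (wt u == z))%N.
Proof.
rewrite /nwt -sum1_card [LHS]big_mkcond; apply: eq_bigr => u _.
rewrite !inE; case: (u *m H^T == 0) => /=; rewrite ?mul1n ?mul0n //; by case: (_ == z).
Qed.

Lemma split_pr (r m : nat) (G : 'rV['F_3]_m -> rat) :
  \sum_u G u * pr r u =
  ((3 ^ r)%:R)^-1 * \sum_u G u + (1 - ((3 ^ r)%:R)^-1) * G 0.
Proof.
rewrite [LHS](bigD1 0) // [X in _ = _ * X + _](bigD1 0) //= /pr eqxx mulr1.
rewrite (eq_bigr (fun u => G u * ((3 ^ r)%:R)^-1)) => [|u /negPf ->] //.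
rewrite -mulr_suml; ring.
Qed.

Lemma wt0 (m : nat) : wt (0 : 'rV['F_3]_m) = 0%N.
Proof. by rewrite wtE big1 // => i _; rewrite mxE eqxx. Qed.

Lemma wt_count (N z : nat) :
  (\sum_(x : 'rV['F_3]_N) (wt x == z) : nat)%:R = ('C(N, z) * 2 ^ z)%:R :> rat.
Proof.
rewrite -coef_count.
under eq_bigr => x _ do rewrite wtE.
rewrite (eq_bigr (fun x : 'rV['F_3]_N => 'X^(\sum_i 1 * (x ord0 i != 0%R))%N)) => [|x _]; last first.
  by congr ('X^_); apply: eq_bigr => i _; rewrite mul1n.
by rewrite GF prodr_const card_ord coef1X.
Qed.

Lemma double_split (m rU rV : nat) (W : 'rV['F_3]_m -> 'rV['F_3]_m -> rat) :
  \sum_u \sum_v W u v * pr rU u * pr rV v =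
  ((3 ^ rU)%:R)^-1 * ((3 ^ rV)%:R)^-1 * (\sum_u \sum_v W u v)
  + ((3 ^ rU)%:R)^-1 * (1 - ((3 ^ rV)%:R)^-1) * (\sum_u W u 0)
  + (1 - ((3 ^ rU)%:R)^-1) * ((3 ^ rV)%:R)^-1 * (\sum_v W 0 v)
  + (1 - ((3 ^ rU)%:R)^-1) * (1 - ((3 ^ rV)%:R)^-1) * W 0 0.
Proof.
transitivity (\sum_u (\sum_v W u v * pr rV v) * pr rU u).
  apply: eq_bigr => u _; rewrite mulr_suml; apply: eq_bigr => v _; by rewrite mulrAC.
rewrite split_pr split_pr.
under eq_bigr => u _ do rewrite split_pr.
rewrite big_split /= -!mulr_sumr; ring.
Qed.

Lemma SV_count' (m z : nat) (a b c d : 'rV['F_3]_m) :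
  (forall i, a 0 i * d 0 i - b 0 i * c 0 i = 1) ->
  (\sum_v (wt (row_mx (hprod a 0 + hprod b v) (hprod c 0 + hprod d v)) == z) : nat)%:R =
  (jsum m #|[set i : 'I_m | b 0 i * d 0 i == 0]| z (odd z))%:R :> rat.
Proof.
move=> hdet; rewrite -(@SV_count m z a b c d hdet); congr (_%:R).
by apply: eq_bigr => v _; rewrite !hprod0 !add0r.
Qed.

Lemma E2_ext (m rU rV : nat) (f g : 'M['F_3]_(rU, m) -> 'M['F_3]_(rV, m) -> nat) :
  (forall HU HV, f HU HV = g HU HV) -> expect2 f = expect2 g.
Proof.
move=> h; rewrite /expect2; congr (_ / _); apply: eq_bigr => HU _.
by apply: eq_bigr => HV _; rewrite h.
Qed.

Theorem proposition8 (n kU kV : nat) (a b c d : 'rV['F_3]_(n./2))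
  (hn : ~~ odd n) (hkU : (kU <= n./2)%N) (hkV : (kV <= n./2)%N)
  (hdet : forall i, a 0 i * d 0 i - b 0 i * c 0 i = 1)
  (hac : forall i, a 0 i * c 0 i != 0) :
  let m := n./2 in
  let nI := #|[set i : 'I_m | b 0 i * d 0 i == 0]| in
  let aUV := fun z => expect2 (fun (HU : 'M['F_3]_(m - kU, m)) (HV : 'M['F_3]_(m - kV, m))
                                  => nwt (codeC a b c d HU HV) z) in
  let aU0 := fun z => expect2 (fun (HU : 'M['F_3]_(m - kU, m)) (HV : 'M['F_3]_(m - kV, m))
                                  => nwt (codeCU a c HU) z) in
  let a0V := fun z => expect2 (fun (HU : 'M['F_3]_(m - kU, m)) (HV : 'M['F_3]_(m - kV, m))
                                  => nwt (codeCV b d HV) z) in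
  (forall z : nat, (1 <= z <= n)%N -> ~~ odd z ->
     [/\ aU0 z = ('C(m, z./2) * 2 ^ z./2)%:R / (3 ^ (m - kU))%:R,
         a0V z = (jsum m nI z false)%:R / (3 ^ (m - kV))%:R &
         aUV z = aU0 z + a0V z
                 + (('C(n, z) * 2 ^ z)%:R - ('C(m, z./2) * 2 ^ z./2)%:R
                    - (jsum m nI z false)%:R) / (3 ^ (n - kU - kV))%:R]) /\
  (forall z : nat, (1 <= z <= n)%N -> odd z ->
     [/\ aU0 z = 0,
         a0V z = (jsum m nI z true)%:R / (3 ^ (m - kV))%:R &
         aUV z = a0V z
                 + (('C(n, z) * 2 ^ z)%:R - (jsum m nI z true)%:R)
                   / (3 ^ (n - kU - kV))%:R]) /\
  (forall z : nat, (0 < z)%N ->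
     expect1 (fun H : 'M['F_3]_(n - kU - kV, n) => nwt (kerH H) z)
     = ('C(n, z) * 2 ^ z)%:R / (3 ^ (n - kU - kV))%:R).
Proof.
move=> m nI aUV aU0 a0V.
have hnm : n = (m + m)%N.
  by rewrite addnn -[LHS](odd_double_half n) (negbTE hn) add0n.
have e3 : (3 ^ (n - kU - kV))%:R = (3 ^ (m - kU))%:R * (3 ^ (m - kV))%:R :> rat.
  have hkU' : (kU <= m)%N := hkU; have hkV' : (kV <= m)%N := hkV.
  have -> : (n - kU - kV = (m - kU) + (m - kV))%N by rewrite hnm; lia.
  by rewrite expnD natrM.
have nz r : (3 ^ r)%:R != 0 :> rat by rewrite pnatr_eq0 -lt0n expn_gt0.
set qU := ((3 ^ (m - kU))%:R)^-1 : rat.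
set qV := ((3 ^ (m - kV))%:R)^-1 : rat.
pose SU z : rat := if odd z then 0 else ('C(m, z./2) * 2 ^ z./2)%:R.
pose SV z : rat := (jsum m nI z (odd z))%:R.
have W00 z : (1 <= z)%N -> (wt (row_mx (hprod a 0 + hprod b 0) (hprod c 0 + hprod d 0)) == z) = false.
  by move=> z1; rewrite !hprod0 addr0 row_mx0 wt0; case: z z1.
have hU z : (1 <= z)%N -> aU0 z = SU z * qU.
  move=> z1; rewrite /aU0 (@E2l m (m - kU) (m - kV) (fun HU : 'M['F_3]_(m - kU, m) => nwt (codeCU a c HU) z)).
  under eq_bigr => HU _ do rewrite (@nwt_CU m (m - kU) z a c HU hac).
  rewrite E1 split_pr -natr_sum SU_count //.
  have -> : (wt (row_mx (hprod a 0) (hprod c 0)) == z) = false.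
    by rewrite !hprod0 row_mx0 wt0; case: z z1.
  by rewrite mulr0 addr0 mulrC.
have hV z : (1 <= z)%N -> a0V z = SV z * qV.
  move=> z1; rewrite /a0V (@E2r m (m - kU) (m - kV) (fun HV : 'M['F_3]_(m - kV, m) => nwt (codeCV b d HV) z)).
  under eq_bigr => HV _ do rewrite (@nwt_CV m (m - kV) z a b c d HV hdet).
  rewrite E1 split_pr -natr_sum (@SV_count m z a b c d hdet).
  have -> : (wt (row_mx (hprod b 0) (hprod d 0)) == z) = false.
    by rewrite !hprod0 row_mx0 wt0; case: z z1.
  by rewrite mulr0 addr0 mulrC.
have hUV z : (1 <= z)%N -> aUV z =
    ('C(n, z) * 2 ^ z)%:R * qU * qV + SU z * qU * (1 - qV) + SV z * qV * (1 - qU).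
  move=> z1; rewrite /aUV.
  rewrite (@E2_ext m (m - kU) (m - kV) _ _ (fun HU HV => @nwt_C m (m - kU) (m - kV) z a b c d HU HV hdet)) E2.
  rewrite double_split W00 // mulr0 addr0.
  under eq_bigr do rewrite -natr_sum.
  rewrite -natr_sum (@T_count m z a b c d hdet).
  rewrite (_ : 'C(m + m, z) = 'C(n, z)); last by rewrite hnm.
  under eq_bigr => u _ do rewrite hprod0 hprod0 !addr0.
  rewrite -!natr_sum (@SU_count m z a c hac) (@SV_count' m z a b c d hdet).
  rewrite /SU /SV /qU /qV -/nI.
  move: ((3 ^ (m - kU))%:R : rat) ((3 ^ (m - kV))%:R : rat) (if odd z then 0 else _ : rat) ((jsum m nI z (odd z))%:R : rat) (('C(n, z) * 2 ^ z)%:R : rat) => A B X Y T.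
  ring.
split; [|split].
- move=> z /andP [z1 _] ev; rewrite hU // hV // hUV // /SU /SV (negbTE ev).
  split => //.
  rewrite e3 /qU /qV; move: (nz (m - kU)%N) (nz (m - kV)%N).
  move: ((3 ^ (m - kU))%:R : rat) ((3 ^ (m - kV))%:R : rat) => A B nA nB.
  by field; rewrite nA nB.
- move=> z /andP [z1 _] od; rewrite hU // hV // hUV // /SU /SV od.
  split => //; first by rewrite mul0r.
  rewrite e3 /qU /qV; move: (nz (m - kU)%N) (nz (m - kV)%N).
  move: ((3 ^ (m - kU))%:R : rat) ((3 ^ (m - kV))%:R : rat) => A B nA nB.
  by field; rewrite nA nB.
- move=> z z0; rewrite /expect1.
  under eq_bigr => H _ do rewrite (@nwt_ker (n - kU - kV) n z H).
  rewrite E1 split_pr -natr_sum wt_count wt0.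
  have -> : (0 == z)%N = false by case: z z0.
  by rewrite mulr0 addr0 mulrC.
Qed.
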